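(* Let $X$ be a shift space over $\mathcal{A}$, let $\sigma:\mathcal{A}^*\to\mathcal{B}^*$ be an injective and strongly left proper morphism with first letter $\ell$, let $Y$ be the image of $X$ under $\sigma$ and let $u$ be a non-empty word in $\mathcal{L}(Y)$. If $\ell$ does not occur in $u$, then there exists $b\in\mathcal{A}$ such that $u$ is a non-prefix factor of $\sigma(b)$. Otherwise, there is a unique triple $(s,v,p)\in\mathcal{B}^*\times\mathcal{L}(X)\times\mathcal{B}^*$ for which there exists a pair $(a,b)\in E_X(v)$ such that $u=s\sigma(v)p$, $s$ is a proper suffix of $\sigma(a)$ and $p$ is a non-empty prefix of $\sigma(b)$. Moreover, in the case where $\ell$ occurs in $u$, $$E_Y(u)=\{(a',b')\in\mathcal{B}\times\mathcal{B}\mid \exists (a,b)\in E_X(v):\ \sigma(a)\in\mathcal{B}^*a's\ \wedge\ \sigma(b)\ell\in pb'\mathcal{B}^*\}.$$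
   Context: A shift space over a finite alphabet $\mathcal{A}$ is a closed shift-invariant $X\subseteq\mathcal{A}^{\mathbb{Z}}$ in which all letters of $\mathcal{A}$ occur; $\mathcal{L}(X)$ is its set of finite factors (including the empty word). For $w\in\mathcal{L}(X)$, $E_X(w)=\{(a,b)\in\mathcal{A}\times\mathcal{A}: awb\in\mathcal{L}(X)\}$. A morphism $\sigma:\mathcal{A}^*\to\mathcal{B}^*$ is a non-erasing monoid morphism; it is strongly left proper with first letter $\ell\in\mathcal{B}$ if for every $a\in\mathcal{A}$, $\sigma(a)$ starts with $\ell$ and $\ell$ occurs exactly once in $\sigma(a)$. The image of $X$ under $\sigma$ is $Y=\{S^k\sigma(x): x\in X, 0\le k<|\sigma(x_0)|\}$ where $S$ is the shift map and $\sigma$ is extended to bi-infinite words by concatenation (with $\sigma(x_0)$ starting at index $0$). *)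

(* Defs.v *)
From mathcomp Require Import all_boot all_order all_algebra.
Set Implicit Arguments. Unset Strict Implicit. Unset Printing Implicit Defensive.
Import GRing.Theory Num.Theory.
Local Open Scope ring_scope.

Definition window (A : Type) (x : int -> A) (i : int) (n : nat) : seq A :=
  [seq x (i + k%:Z) | k <- iota 0 n].

Definition shift (A : Type) (x : int -> A) : int -> A := fun i => x (i + 1).

(* X is closed in the product topology of A^Z (A discrete): any point all of
   whose central cylinders meet X belongs to X *)
Definition closed_set (A : Type) (X : (int -> A) -> Prop) : Prop :=
  forall x : int -> A,
    (forall n : nat, exists y, X y /\
        forall j : int, - n%:Z <= j <= n%:Z -> y j = x j) -> X x.

Definition shift_invariant (A : Type) (X : (int -> A) -> Prop) : Prop :=
  (forall x, X x -> X (shift x)) /\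
  (forall y, X y -> exists x, X x /\ shift x = y).

Definition shift_space (A : Type) (X : (int -> A) -> Prop) : Prop :=
  [/\ closed_set X, shift_invariant X &
      forall a : A, exists x, X x /\ exists i, x i = a].

Definition lang (A : Type) (X : (int -> A) -> Prop) (w : seq A) : Prop :=
  w = [::] \/ exists x, X x /\ exists i, window x i (size w) = w.

Definition ext_set (A : Type) (X : (int -> A) -> Prop) (w : seq A) (a b : A) : Prop :=
  lang X (a :: w ++ [:: b]).

Definition morph (A B : Type) (sigma : A -> seq B) (w : seq A) : seq B :=
  flatten (map sigma w).

Definition non_erasing (A B : Type) (sigma : A -> seq B) : Prop :=
  forall a, sigma a <> [::].

Definition strongly_left_proper (A B : eqType) (sigma : A -> seq B) (l : B) : Prop :=
  forall a, (exists t, sigma a = l :: t) /\ count_mem l (sigma a) = 1%N.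

(* z is the bi-infinite word sigma(x), with sigma(x_0) starting at index 0:
   for every n, sigma(x_{-n} ... x_{n-1}) occurs in z starting at index
   -|sigma(x_{-n} ... x_{-1})| *)
Definition sigma_bi (A B : Type) (sigma : A -> seq B) (x : int -> A) (z : int -> B) : Prop :=
  forall n : nat,
    window z (- (size (morph sigma (window x (- n%:Z) n)))%:Z)
             (size (morph sigma (window x (- n%:Z) (n + n))))
    = morph sigma (window x (- n%:Z) (n + n)).

(* image of X under sigma: { S^k sigma(x) | x \in X, 0 <= k < |sigma(x_0)| } *)
Definition image_shift (A B : Type) (X : (int -> A) -> Prop) (sigma : A -> seq B)
  (y : int -> B) : Prop :=
  exists x z (k : nat), [/\ X x, sigma_bi sigma x z, (k < size (sigma (x 0)))%N &
                         forall i, y i = z (i + k%:Z)].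

Definition nonprefix_factor (B : Type) (u w : seq B) : Prop :=
  exists s t, s <> [::] /\ w = s ++ u ++ t.

Definition triple_prop (A B : Type) (X : (int -> A) -> Prop) (sigma : A -> seq B)
  (u : seq B) (s : seq B) (v : seq A) (p : seq B) : Prop :=
  lang X v /\
  exists a b, [/\ ext_set X v a b, u = s ++ morph sigma v ++ p,
                  (exists t, t <> [::] /\ sigma a = t ++ s) &
                  (p <> [::] /\ exists r, sigma b = p ++ r)].

(* Main.v *)
Require Import Defs.
From mathcomp Require Import all_boot all_order all_algebra zify.
Set Implicit Arguments. Unset Strict Implicit. Unset Printing Implicit Defensive.
Import Order.TTheory GRing.Theory Num.Theory.
Local Open Scope ring_scope.

Lemma size_window (T : Type) (x : int -> T) i n : size (window x i n) = n.
Proof. by rewrite /window size_map size_iota. Qed.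

Lemma window_S (T : Type) (x : int -> T) i n :
  window x i n.+1 = x i :: window x (i + 1) n.
Proof.
rewrite /window /= addr0; congr (_ :: _).
rewrite -(addn0 1%N) iotaDl -map_comp; apply: eq_map => k /=.
congr x; lia.
Qed.

Lemma window_cat (T : Type) (x : int -> T) i m n :
  window x i (m + n) = window x i m ++ window x (i + m%:Z) n.
Proof.
elim: m i => [|m IH] i; first by rewrite add0n addr0.
rewrite addSn !window_S IH cat_cons; have -> : i + 1 + m%:Z = i + m.+1%:Z by lia. by [].
Qed.

Lemma nth_window (T : Type) (x : int -> T) d i n j :
  (j < n)%N -> nth d (window x i n) j = x (i + j%:Z).
Proof. by move=> h; rewrite /window (nth_map 0%N) ?size_iota // nth_iota. Qed.

Lemma window1 (T : Type) (x : int -> T) i : window x i 1 = [:: x i].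
Proof. by rewrite window_S. Qed.

Lemma window_eq_cat (T : Type) (x : int -> T) P n L1 L2 :
  window x P n = L1 ++ L2 ->
  window x P (size L1) = L1 /\ window x (P + (size L1)%:Z) (size L2) = L2.
Proof.
move=> h; have hn : n = (size L1 + size L2)%N by rewrite -size_cat -h size_window.
move: h; rewrite hn window_cat => h.
split.
  by move: (congr1 (take (size L1)) h); rewrite !take_size_cat ?size_window.
by move: (congr1 (drop (size L1)) h); rewrite !drop_size_cat ?size_window.
Qed.

Lemma window_absz (T : Type) (x : int -> T) a b c : a <= b -> b <= c ->
  window x a `|c - a|%N = window x a `|b - a|%N ++ window x b `|c - b|%N.
Proof.
move=> h1 h2; have -> : `|c - a|%N = (`|b - a| + `|c - b|)%N by lia.
rewrite window_cat; congr (_ ++ window _ _ _); lia.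
Qed.

Lemma morph_cat (A B : Type) (s : A -> seq B) u v :
  morph s (u ++ v) = morph s u ++ morph s v.
Proof. by rewrite /morph map_cat flatten_cat. Qed.

Lemma morph_cons (A B : Type) (s : A -> seq B) a v :
  morph s (a :: v) = s a ++ morph s v.
Proof. by []. Qed.

Lemma morph1 (A B : Type) (s : A -> seq B) a : morph s [:: a] = s a.
Proof. by rewrite /morph /= cats0. Qed.

Definition sizeW (A B : Type) (sigma : A -> seq B) (x : int -> A) i n :=
  size (morph sigma (window x i n)).

Definition pos (A B : Type) (sigma : A -> seq B) (x : int -> A) (i : int) : int :=
  match i with
  | Posz n => (sizeW sigma x 0 n)%:Z
  | Negz n => - (sizeW sigma x (Negz n) n.+1)%:Z
  end.

Lemma sizeWS (A B : Type) (sigma : A -> seq B) x i n :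
  sizeW sigma x i n.+1 = (size (sigma (x i)) + sizeW sigma x (i + 1) n)%N.
Proof. by rewrite /sizeW window_S morph_cons size_cat. Qed.

Lemma sizeWD (A B : Type) (sigma : A -> seq B) x i m n :
  sizeW sigma x i (m + n) = (sizeW sigma x i m + sizeW sigma x (i + m%:Z) n)%N.
Proof. by rewrite /sizeW window_cat morph_cat size_cat. Qed.

Lemma posS (A B : Type) (sigma : A -> seq B) x i :
  pos sigma x (i + 1) = pos sigma x i + (size (sigma (x i)))%:Z.
Proof.
case: i => [n|n].
  have -> : Posz n + 1 = Posz n.+1 by lia.
  by rewrite /= -addn1 sizeWD /sizeW window1 add0r /morph /= cats0 PoszD.
case: n => [|n].
  have -> : Negz 0 + 1 = 0 by [].
  rewrite /= sizeWS /sizeW /=; lia.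
have -> : Negz n.+1 + 1 = Negz n by lia.
rewrite /= [in RHS]sizeWS.
have -> : Negz n.+1 + 1 = Negz n by lia.
lia.
Qed.

Lemma posD (A B : Type) (sigma : A -> seq B) x i n :
  pos sigma x (i + n%:Z) = pos sigma x i + (sizeW sigma x i n)%:Z.
Proof.
elim: n => [|n IH]; first by rewrite addr0 /sizeW /= addr0.
have -> : i + n.+1%:Z = (i + n%:Z) + 1 by lia.
rewrite posS IH -addn1 sizeWD /sizeW window1 morph1; lia.
Qed.

Lemma pos0 (A B : Type) (sigma : A -> seq B) x : pos sigma x 0 = 0.
Proof. by []. Qed.

Lemma sizeW_ge (A B : Type) (sigma : A -> seq B) x i n :
  non_erasing sigma -> (n <= sizeW sigma x i n)%N.
Proof.
move=> ne; elim: n i => [|n IH] i //; rewrite sizeWS.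
have : (0 < size (sigma (x i)))%N by case E: (sigma (x i)) (ne (x i)).
move: (IH (i+1)); lia.
Qed.

Lemma pos_le (A B : Type) (sigma : A -> seq B) x i j :
  non_erasing sigma -> i <= j -> j - i <= pos sigma x j - pos sigma x i.
Proof.
move=> ne h; have -> : j = i + `|j - i|%N%:Z by lia.
rewrite posD; move: (sizeW_ge x i `|j - i|%N ne); lia.
Qed.

Lemma pos_lt (A B : Type) (sigma : A -> seq B) x i j :
  non_erasing sigma -> i < j -> pos sigma x i < pos sigma x j.
Proof. move=> ne h; move: (pos_le x ne (ltW h)); lia. Qed.

Lemma pos_mono (A B : Type) (sigma : A -> seq B) x i j :
  non_erasing sigma -> i <= j -> pos sigma x i <= pos sigma x j.
Proof. move=> ne h; move: (pos_le x ne h); lia. Qed.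

Lemma pos_refl (A B : Type) (sigma : A -> seq B) x i j :
  non_erasing sigma -> pos sigma x i < pos sigma x j -> i < j.
Proof.
move=> ne h; case: (ltrP i j) => // h2; move: (pos_mono x ne h2); lia.
Qed.

Definition BP (A B : Type) (sigma : A -> seq B) (x : int -> A) (z : int -> B) :=
  forall i, window z (pos sigma x i) (size (sigma (x i))) = sigma (x i).

Lemma BP_window (A B : Type) (sigma : A -> seq B) x z i n :
  BP sigma x z ->
  window z (pos sigma x i) (sizeW sigma x i n) = morph sigma (window x i n).
Proof.
move=> bp; elim: n i => [|n IH] i; first by [].
rewrite sizeWS window_cat window_S morph_cons bp -posS IH //.
Qed.

Lemma window_blocks (A B : Type) (sigma : A -> seq B) x z i n :
  window z (pos sigma x i) (sizeW sigma x i n) = morph sigma (window x i n) ->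
  forall k, (k < n)%N ->
  window z (pos sigma x (i + k%:Z)) (size (sigma (x (i + k%:Z)))) = sigma (x (i + k%:Z)).
Proof.
elim: n i => [|n IH] i //.
rewrite window_S morph_cons => /window_eq_cat [h1 h2] [|k] hk.
  by rewrite addr0.
have := IH (i + 1); rewrite posS => /(_ h2 k hk).
by have -> : i + 1 + k%:Z = i + k.+1%:Z by lia.
Qed.

Lemma sigma_bi_BP (A B : Type) (sigma : A -> seq B) x z :
  sigma_bi sigma x z -> BP sigma x z.
Proof.
move=> h i; pose N := `|i|.+1.
have hN : pos sigma x (- N%:Z) = - (sizeW sigma x (- N%:Z) N)%:Z.
  have := posD sigma x (- N%:Z) N; rewrite addNr pos0; lia.
have := h N; rewrite -/(sizeW sigma x _ _) -hN => /window_blocks.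
move=> /(_ (absz (i + N%:Z))); rewrite /N.
have -> : - (absz i).+1%:Z + (absz (i + (absz i).+1%:Z))%:Z = i by lia.
apply; lia.
Qed.

Lemma BP_sigma_bi (A B : Type) (sigma : A -> seq B) x z :
  BP sigma x z -> sigma_bi sigma x z.
Proof.
move=> bp n; rewrite -/(sizeW sigma x _ _).
have -> : - (sizeW sigma x (- n%:Z) n)%:Z = pos sigma x (- n%:Z).
  have := posD sigma x (- n%:Z) n; rewrite addNr pos0; lia.
exact: BP_window.
Qed.

Lemma blockF1 (A B : Type) (sigma : A -> seq B) x (m : int) :
  non_erasing sigma ->
  exists i, pos sigma x i <= m < pos sigma x (i + 1).
Proof.
move=> ne.
have hs : forall i : int, 0 < pos sigma x (i + 1) - pos sigma x i.
  move=> i; rewrite posS; have : (0 < size (sigma (x i)))%N by case E: (sigma (x i)) (ne (x i)).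
  lia.
suff : forall k : nat, (exists i, pos sigma x i <= k%:Z < pos sigma x (i + 1)) /\
                      (exists i, pos sigma x i <= - k%:Z < pos sigma x (i + 1)).
  move=> H; case: m => n; first by case: (H n).
  by case: (H n.+1) => _; rewrite NegzE.
elim=> [|k [[i hi] [j hj]]].
  by split; exists 0; move: (hs 0) (pos0 sigma x); rewrite !add0r; lia.
split.
  case: (boolP (k.+1%:Z < pos sigma x (i + 1))) => h.
    by exists i; lia.
  exists (i + 1); move: (hs (i + 1)); lia.
case: (boolP (pos sigma x j <= - k.+1%:Z)) => h.
  by exists j; lia.
exists (j - 1); have := hs (j - 1); rewrite subrK; lia.
Qed.

Lemma block_uniq (A B : Type) (sigma : A -> seq B) x (m : int) i j :
  non_erasing sigma ->
  pos sigma x i <= m < pos sigma x (i + 1) ->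
  pos sigma x j <= m < pos sigma x (j + 1) -> i = j.
Proof.
move=> ne h1 h2.
have a1 : i < j + 1 by apply: (@pos_refl _ _ sigma x i (j + 1) ne); lia.
have a2 : j < i + 1 by apply: (@pos_refl _ _ sigma x j (i + 1) ne); lia.
lia.
Qed.

Lemma exists_z (A B : Type) (sigma : A -> seq B) x (d : B) :
  non_erasing sigma -> exists z, BP sigma x z.
Proof.
move=> ne.
pose z := fun m => let i := xchoose (blockF1 x m ne) in
                   nth d (sigma (x i)) `|m - pos sigma x i|%N.
exists z => i; apply: (@eq_from_nth _ d); first by rewrite size_window.
rewrite size_window => j hj; rewrite nth_window // /z.
have := xchooseP (blockF1 x (pos sigma x i + j%:Z) ne).
set i' := xchoose _ => hi'.
have hi : pos sigma x i <= pos sigma x i + j%:Z < pos sigma x (i + 1).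
  rewrite posS; lia.
rewrite (block_uniq ne hi' hi); congr nth; lia.
Qed.

Lemma BP_l (A B : eqType) (sigma : A -> seq B) l x z i :
  BP sigma x z -> strongly_left_proper sigma l -> z (pos sigma x i) = l.
Proof.
move=> bp slp; have := bp i; case: (slp (x i)) => [[t ->] _].
by rewrite window_S => -[].
Qed.

Lemma BP_notl (A B : eqType) (sigma : A -> seq B) l x z i m :
  BP sigma x z -> strongly_left_proper sigma l ->
  pos sigma x i < m < pos sigma x (i + 1) -> z m != l.
Proof.
move=> bp slp hm; have := bp i; case: (slp (x i)) => [[t ht] hc].
move: hc; rewrite ht /= eqxx add1n => -[] /count_memPn hnt.
have hlt : (`|m - pos sigma x i|%N < size (sigma (x i)))%N.
  move: hm; rewrite posS; lia.
move=> /(congr1 (fun w => nth l w `|m - pos sigma x i|%N)).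
rewrite nth_window; last by rewrite ht in hlt.
have -> : pos sigma x i + `|m - pos sigma x i|%N%:Z = m by lia.
move: hlt; rewrite ht; case E: `|m - pos sigma x i|%N => [|k] /= hlt.
  by move: hm E; lia.
move=> ->; apply/negP => /eqP hk.
have : l \in t by rewrite -hk mem_nth.
by rewrite (negbTE hnt).
Qed.

Lemma lang_Y_inv (A B : Type) (X : (int -> A) -> Prop) sigma (u : seq B) :
  u <> [::] -> lang (image_shift X sigma) u ->
  exists x z q, [/\ X x, BP sigma x z & window z q (size u) = u].
Proof.
move=> hu [//|[y [[x [z [k [hx hz hk hy]]]] [i hw]]]].
exists x, z, (i + k%:Z); split => //; first exact: sigma_bi_BP.
rewrite -[RHS]hw /window; apply: eq_map => j; rewrite hy; congr z; lia.
Qed.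

Lemma lang_Y_of (A B : Type) (X : (int -> A) -> Prop) sigma x (z : int -> B) q n :
  non_erasing sigma -> X x -> BP sigma x z -> lang (image_shift X sigma) (window z q n).
Proof.
move=> ne hx bp; right; exists z; split; last by exists q; rewrite size_window.
exists x, z, 0%N; split => //; first exact: BP_sigma_bi.
  by case E: (sigma (x 0)) (ne (x 0)).
by move=> i; rewrite addr0.
Qed.

Lemma lang_X_of (A : Type) (X : (int -> A) -> Prop) x i n :
  X x -> lang X (window x i n).
Proof. by move=> hx; right; exists x; split => //; exists i; rewrite size_window. Qed.

Lemma lang_X_inv (A : Type) (X : (int -> A) -> Prop) w :
  w <> [::] -> lang X w -> exists x i, X x /\ window x i (size w) = w.
Proof. by move=> hw [//|[x [hx [i h]]]]; exists x, i. Qed.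

Lemma caseAB (A B : Type) (sigma : A -> seq B) x (q : int) (n : nat) :
  non_erasing sigma -> (0 < n)%N ->
  (exists c : int, pos sigma x c < q /\ q + n%:Z <= pos sigma x (c + 1)) \/
  (exists i i' : int, [/\ i <= i', pos sigma x (i - 1) < q <= pos sigma x i,
                    pos sigma x i' < q + n%:Z & q + n%:Z <= pos sigma x (i' + 1)]).
Proof.
move=> ne hn.
have [c hc] := blockF1 x q ne.
have [i' hi'] := blockF1 x (q + n%:Z - 1) ne.
case: (boolP (pos sigma x c == q)) => /eqP hcq.
  right; exists c, i'; split.
  - have : c < i' + 1 by apply: (@pos_refl _ _ sigma x c (i' + 1) ne); lia.
    lia.
  - by rewrite -hcq lexx andbT; apply: pos_lt => //; lia.
  - lia.
  - lia.
case: (boolP (q + n%:Z <= pos sigma x (c + 1))) => h.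
  by left; exists c; lia.
right; exists (c + 1), i'; split.
- have : c + 1 < i' + 1 by apply: (@pos_refl _ _ sigma x (c + 1) (i' + 1) ne); lia.
  lia.
- rewrite addrK; lia.
- lia.
- lia.
Qed.

Lemma caseA_notin (A B : eqType) (sigma : A -> seq B) l x z q n c :
  BP sigma x z -> strongly_left_proper sigma l ->
  pos sigma x c < q -> q + n%:Z <= pos sigma x (c + 1) -> l \notin window z q n.
Proof.
move=> bp slp h1 h2; apply/negP => /(nthP l) [j hj].
rewrite size_window in hj; rewrite nth_window // => hz.
suff : z (q + j%:Z) != l by rewrite hz eqxx.
apply: (BP_notl (i := c) bp slp); lia.
Qed.

Lemma caseB_in (A B : eqType) (sigma : A -> seq B) l x z q n i :
  BP sigma x z -> strongly_left_proper sigma l ->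
  q <= pos sigma x i -> pos sigma x i < q + n%:Z -> l \in window z q n.
Proof.
move=> bp slp h1 h2.
have hj : (absz ((pos sigma x i - q)%R) < n)%N by lia.
rewrite -(BP_l i bp slp).
have -> : pos sigma x i = q + (absz ((pos sigma x i - q)%R))%:Z by lia.
by rewrite -(nth_window z l q hj) mem_nth // size_window.
Qed.

Lemma sigma_win (A B : Type) (sigma : A -> seq B) x z i :
  BP sigma x z ->
  sigma (x i) = window z (pos sigma x i) (absz ((pos sigma x (i + 1) - pos sigma x i)%R)).
Proof. by move=> bp; rewrite posS; have -> : forall (a : int) (b : nat), absz ((a + b%:Z - a)%R) = b by move=> a b; lia. Qed.

Lemma caseA_nonprefix (A B : Type) (sigma : A -> seq B) x z q n c :
  BP sigma x z ->
  pos sigma x c < q -> q + n%:Z <= pos sigma x (c + 1) ->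
  nonprefix_factor (window z q n) (sigma (x c)).
Proof.
move=> bp h1 h2; rewrite (sigma_win c bp).
exists (window z (pos sigma x c) (absz ((q - pos sigma x c)%R))),
       (window z (q + n%:Z) (absz ((pos sigma x (c + 1) - (q + n%:Z))%R))).
split.
  by move=> /(congr1 size); rewrite size_window /=; lia.
rewrite (@window_absz _ z (pos sigma x c) q (pos sigma x (c + 1))); try lia.
rewrite (@window_absz _ z q (q + n%:Z) (pos sigma x (c + 1))); try lia.
by have -> : absz ((q + n%:Z - q)%R) = n by lia.
Qed.

Lemma window_one (T : Type) (z : int -> T) (a b : int) :
  b = a + 1 -> window z a (absz ((b - a)%R)) = [:: z a].
Proof. move=> ->; have -> : absz ((a + 1 - a)%R) = 1%N by lia. by rewrite window1. Qed.

Lemma caseB (A B : eqType) (X : (int -> A) -> Prop) (sigma : A -> seq B) l x z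
  (q : int) (n : nat) (i i' : int) :
  X x -> BP sigma x z -> strongly_left_proper sigma l -> non_erasing sigma ->
  i <= i' -> pos sigma x (i - 1) < q -> q <= pos sigma x i ->
  pos sigma x i' < q + n%:Z -> q + n%:Z <= pos sigma x (i' + 1) ->
  exists s v p a b,
    [/\ lang X v, ext_set X v a b, window z q n = s ++ morph sigma v ++ p,
        (exists t, t <> [::] /\ sigma a = t ++ s) /\ (p <> [::] /\ exists r, sigma b = p ++ r) &
        (exists t, sigma a = t ++ z (q - 1) :: s) /\
        (exists r, sigma b ++ [:: l] = p ++ z (q + n%:Z) :: r)].
Proof.
move=> hx bp slp ne hii' h1 h2 h3 h4.
have hpi : pos sigma x i <= pos sigma x i' by apply: pos_mono.
have hp1 : pos sigma x i' < pos sigma x (i' + 1) by apply: pos_lt => //; lia.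
set s := window z q (absz ((pos sigma x i - q)%R)).
set v := window x i (absz ((i' - i)%R)).
set p := window z (pos sigma x i') (absz ((q + n%:Z - pos sigma x i')%R)).
exists s, v, p, (x (i - 1)), (x i'); split.
- exact: lang_X_of.
- rewrite /ext_set.
  have -> : x (i - 1) :: v ++ [:: x i'] = window x (i - 1) (absz ((i' - i)%R) + 1).+1.
    rewrite window_S window_cat window1.
    have -> : i - 1 + 1 = i by lia.
    by have -> : i + (absz ((i' - i)%R))%:Z = i' by lia.
  exact: lang_X_of.
- have -> : n = absz ((q + n%:Z - q)%R) by lia.
  rewrite (@window_absz _ z q (pos sigma x i) (q + n%:Z)); try lia.
  rewrite (@window_absz _ z (pos sigma x i) (pos sigma x i') (q + n%:Z)); try lia.
  congr (_ ++ _ ++ _).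
  have hk := posD sigma x i (absz ((i' - i)%R)).
  have e : i + (absz ((i' - i)%R))%:Z = i' by lia.
  rewrite e in hk.
  rewrite -(BP_window _ _ bp); congr window; lia.
- have hsa := sigma_win (i - 1) bp; rewrite subrK in hsa.
  have hsb := sigma_win i' bp.
  split.
    exists (window z (pos sigma x (i - 1)) (absz ((q - pos sigma x (i - 1))%R))); split.
      by move=> /(congr1 size); rewrite size_window /=; lia.
    rewrite hsa (@window_absz _ z (pos sigma x (i - 1)) q (pos sigma x i)) //; lia.
  split.
    by move=> /(congr1 size); rewrite size_window /=; lia.
  exists (window z (q + n%:Z) (absz ((pos sigma x (i' + 1) - (q + n%:Z))%R))).
  by rewrite hsb (@window_absz _ z (pos sigma x i') (q + n%:Z) (pos sigma x (i' + 1))) //; lia.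
- have hsa := sigma_win (i - 1) bp; rewrite subrK in hsa.
  have hsb := sigma_win i' bp.
  split.
    exists (window z (pos sigma x (i - 1)) (absz ((q - 1 - pos sigma x (i - 1))%R))).
    rewrite hsa (@window_absz _ z (pos sigma x (i - 1)) q (pos sigma x i)) //; try lia.
    rewrite (@window_absz _ z (pos sigma x (i - 1)) (q - 1) q) //; try lia.
    by rewrite (@window_one _ z (q - 1) q) //; [rewrite -catA | lia].
  exists (window z (q + n%:Z + 1) (absz ((pos sigma x (i' + 1) + 1 - (q + n%:Z + 1))%R))).
  have hl : window z (pos sigma x (i' + 1)) (absz ((pos sigma x (i' + 1) + 1 - pos sigma x (i' + 1))%R)) = [:: l].
    by rewrite window_one // (BP_l _ bp slp).
  rewrite hsb -hl -window_absz; try lia.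
  rewrite (@window_absz _ z (pos sigma x i') (q + n%:Z) (pos sigma x (i' + 1) + 1)); try lia.
  rewrite (@window_absz _ z (q + n%:Z) (q + n%:Z + 1) (pos sigma x (i' + 1) + 1)); try lia.
  by rewrite (@window_one _ z (q + n%:Z) (q + n%:Z + 1)).
Qed.

Lemma slp_suffix (A B : eqType) (sigma : A -> seq B) l a t s :
  strongly_left_proper sigma l -> sigma a = t ++ s -> t <> [::] -> l \notin s.
Proof.
move=> slp; case: (slp a) => [[t0 ht0] hc] h ht.
move: hc; rewrite ht0 /= eqxx add1n => -[] /count_memPn hnt.
case: t h ht => [//|c t'] /=; rewrite ht0 => -[_ e] _.
apply: contra hnt => H; by rewrite e mem_cat H orbT.
Qed.

Lemma slp_prefix (A B : eqType) (sigma : A -> seq B) l b p r :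
  strongly_left_proper sigma l -> sigma b = p ++ r -> p <> [::] ->
  exists p1, p = l :: p1 /\ l \notin p1.
Proof.
move=> slp; case: (slp b) => [[t0 ht0] hc] h hp.
move: hc; rewrite ht0 /= eqxx add1n => -[] /count_memPn hnt.
case: p h hp => [//|c p1] /=; rewrite ht0 => -[<- e] _.
exists p1; split => //; apply: contra hnt => H; by rewrite e mem_cat H.
Qed.

Lemma slp_morph (A B : eqType) (sigma : A -> seq B) l v p1 :
  strongly_left_proper sigma l -> exists w, morph sigma v ++ l :: p1 = l :: w.
Proof.
move=> slp; case: v => [|a v]; first by exists p1.
rewrite morph_cons; case: (slp a) => [[t ->] _].
by exists (t ++ morph sigma v ++ l :: p1); rewrite -catA.
Qed.

Lemma first_l (B : eqType) (l : B) s w s' w' :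
  s ++ l :: w = s' ++ l :: w' -> l \notin s -> l \notin s' -> s = s' /\ w = w'.
Proof.
move=> e h h'.
have hi : forall s0 w0, l \notin s0 -> index l (s0 ++ l :: w0) = size s0.
  by move=> s0 w0 hn; rewrite index_cat (negbTE hn) /= eqxx addn0.
have hs : s = s'.
  have := congr1 (fun U => take (index l U) U) e.
  by rewrite /= !hi // !take_size_cat.
split => //; subst s'.
by have := congr1 (drop (size s)) e; rewrite !drop_size_cat // => -[].
Qed.

Lemma last_l (B : eqType) (l : B) L1 M1 L2 M2 :
  L1 ++ l :: M1 = L2 ++ l :: M2 -> l \notin M1 -> l \notin M2 -> L1 = L2 /\ M1 = M2.
Proof.
move=> e h1 h2.
have r : forall L M, rev (L ++ l :: M) = rev M ++ l :: rev L.
  by move=> L M; rewrite rev_cat rev_cons -cats1 -catA.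
have := congr1 rev e; rewrite !r => /first_l; rewrite !mem_rev => /(_ h1 h2) [e1 e2].
by split; apply: (can_inj (@revK _)).
Qed.

Lemma uniq_triple (A B : eqType) (X : (int -> A) -> Prop) (sigma : A -> seq B) l u
  s v p s' v' p' :
  injective (morph sigma) -> strongly_left_proper sigma l ->
  triple_prop X sigma u s v p -> triple_prop X sigma u s' v' p' -> (s', v', p') = (s, v, p).
Proof.
move=> inj slp [_ [a [b [_ hu [t [ht hta]] [hp [r hr]]]]]]
              [_ [a' [b' [_ hu' [t' [ht' hta']] [hp' [r' hr']]]]]].
have hs := slp_suffix slp hta ht; have hs' := slp_suffix slp hta' ht'.
have [p1 [ep hp1]] := slp_prefix slp hr hp.
have [p1' [ep' hp1']] := slp_prefix slp hr' hp'.
have [w hw] := slp_morph v p1 slp; have [w' hw'] := slp_morph v' p1' slp.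
have e : s ++ l :: w = s' ++ l :: w' by rewrite -hw -hw' -ep -ep' -hu -hu'.
have [es _] := first_l e hs hs'; subst s'.
have e2 : morph sigma v ++ l :: p1 = morph sigma v' ++ l :: p1'.
  have := congr1 (drop (size s)) (etrans (esym hu) hu').
  by rewrite !drop_size_cat // -ep -ep'.
have [ev ep1] := last_l e2 hp1 hp1'.
by rewrite ep ep' ep1 (inj _ _ ev).
Qed.

Theorem proposition4p1 (A B : finType) (X : (int -> A) -> Prop)
  (sigma : A -> seq B) (l : B) :
  shift_space X ->
  non_erasing sigma ->
  injective (morph sigma) ->
  strongly_left_proper sigma l ->
  forall u : seq B, u <> [::] -> lang (image_shift X sigma) u ->
  (l \notin u -> exists b : A, nonprefix_factor u (sigma b)) /\
  (l \in u ->
     exists (s : seq B) (v : seq A) (p : seq B),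
       [/\ triple_prop X sigma u s v p,
           (forall s' v' p', triple_prop X sigma u s' v' p' ->
              (s', v', p') = (s, v, p)) &
           (forall a' b' : B,
              ext_set (image_shift X sigma) u a' b' <->
              exists a b : A, [/\ ext_set X v a b,
                 (exists t, sigma a = t ++ a' :: s) &
                 (exists r, sigma b ++ [:: l] = p ++ b' :: r)])]).
Proof.
move=> _ ne inj slp u hu hlang.
have [x [z [q [hx bp hw]]]] := lang_Y_inv hu hlang.
have hn : (0 < size u)%N by case: u hu {hlang hw} => // _ _ _.
move: hn hw hu hlang; move: (size u) => n hn hw; subst u => hu hlang.
split.
  move=> hnl; case: (caseAB x q ne hn) => [[c [h1 h2]] | [i [i' [hii /andP [h1 h2] h3 h4]]]].
    by exists (x c); apply: caseA_nonprefix h1 h2.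
  have : l \in window z q n.
    apply: (caseB_in (i := i) bp slp) => //.
    have H : pos sigma x i <= pos sigma x i' by apply: pos_mono.
    exact: le_lt_trans H h3.
  by rewrite (negbTE hnl).
move=> hl; case: (caseAB x q ne hn) => [[c [h1 h2]] | [i [i' [hii /andP [h1 h2] h3 h4]]]].
  by move: hl; rewrite (negbTE (caseA_notin bp slp h1 h2)).
have [s [v [p [a [b [hv hab hu' [ht hp] [ha' hb']]]]]]] :=
  caseB hx bp slp ne hii h1 h2 h3 h4.
have tp : triple_prop X sigma (window z q n) s v p.
  by split => //; exists a, b; split.
exists s, v, p; split => //.
  by move=> s' v' p' tp'; apply: (uniq_triple inj slp tp tp').
move=> a' b'; split.
  move=> hext.
  have hne : a' :: window z q n ++ [:: b'] <> [::] by [].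
  have [x2 [z2 [q2 [hx2 bp2 hw2]]]] := lang_Y_inv hne hext.
  move: hw2; rewrite /= size_cat size_window /= addn1 window_S => -[hz2 hw2].
  have [hw3 hw4] := window_eq_cat hw2.
  rewrite size_window in hw3 hw4; rewrite window1 in hw4; case: hw4 => hb2.
  have hl2 : l \in window z2 (q2 + 1) n by rewrite hw3.
  case: (caseAB x2 (q2 + 1) ne hn) => [[c [g1 g2]] | [j [j' [hjj /andP [g1 g2] g3 g4]]]].
    by move: hl2; rewrite (negbTE (caseA_notin bp2 slp g1 g2)).
  have [s2 [v2 [p2 [a2 [b2 [hv2 hab2 hu2 [ht2 hp2] [ha2 hb2']]]]]]] :=
    caseB hx2 bp2 slp ne hjj g1 g2 g3 g4.
  have tp2 : triple_prop X sigma (window z q n) s2 v2 p2.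
    by split => //; exists a2, b2; split => //; rewrite -hw3.
  case: (uniq_triple inj slp tp tp2) => es ev ep; subst s2 v2 p2.
  exists a2, b2; split => //.
    by case: ha2 => t2; rewrite addrK hz2 => ->; exists t2.
  by case: hb2' => r2; rewrite hb2 => ->; exists r2.
move=> [a1 [b1 [hab1 [t ht1] [r hr1]]]].
have hne : a1 :: v ++ [:: b1] <> [::] by [].
have [x2 [i0 [hx2 hw2]]] := lang_X_inv hne hab1.
have [z2 bp2] := exists_z x2 l ne.
set N := size (a1 :: v ++ [:: b1]).
have hW : window z2 (pos sigma x2 i0) (sizeW sigma x2 i0 N + 1) =
          t ++ (a' :: window z q n ++ [:: b']) ++ r.
  rewrite window_cat BP_window // hw2 -posD window1 (BP_l _ bp2 slp).
  rewrite morph_cons morph_cat morph1 ht1 -!catA hr1 hu' /= -!catA /=.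
  by [].
have [_ hW2] := window_eq_cat hW.
have [hW3 _] := window_eq_cat hW2.
rewrite /ext_set -hW3.
exact: lang_Y_of ne hx2 bp2.
Qed.
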